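(* Let $f_1,f_2,\dots$ be real-valued measurable functions on a probability space $(\Omega,\mathcal F,\mathbb P)$ with tail $\sigma$-algebra $\mathcal T=\bigcap_n\sigma(f_n,f_{n+1},\dots)$. Suppose there are a subsequence $(f_{k_n})_n$ and real-valued $\mathcal T$-measurable $D_1,D_2,\dots$ such that, along $(f_{k_n})_n$ and along every further subsequence $(f_{m_n})_n$ of it, $\frac1N\sum_{n=1}^Nf_{m_n}-D_N\to0$ in $\mathbb P$-probability as $N\to\infty$. Then, passing to a further subsequence, $(f_{k_n})_n$ may be assumed bounded in probability, i.e. $\lim_{M\to\infty}\sup_n\mathbb P(|f_{k_n}|>M)=0$. *)

(* Defs.v *)
From HB Require Import structures.
From mathcomp Require Import all_boot all_order all_algebra.
From mathcomp Require Import all_classical all_reals all_analysis.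
Set Implicit Arguments. Unset Strict Implicit. Unset Printing Implicit Defensive.
Import Order.TTheory GRing.Theory Num.Theory.
Import numFieldNormedType.Exports.
Local Open Scope classical_set_scope.
Local Open Scope ring_scope.

Section tail.
Context d (T : measurableType d) (R : realType).

Definition tail_gen (f : nat -> T -> R) (n : nat) : set (set T) :=
  [set A | exists k, (n <= k)%N /\ exists B : set R, measurable B /\ A = f k @^-1` B].

Definition sigma_from (f : nat -> T -> R) (n : nat) : set (set T) :=
  <<s tail_gen f n >>.

Definition tail_sigma (f : nat -> T -> R) : set (set T) :=
  [set A | forall n, sigma_from f n A].

Definition tail_measurable (f : nat -> T -> R) (D : T -> R) : Prop :=
  forall B : set R, measurable B -> tail_sigma f (D @^-1` B).

Definition strict_incr (s : nat -> nat) : Prop := forall n, (s n < s n.+1)%N.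

End tail.

(* Main.v *)
Require Import Defs.
From HB Require Import structures.
From mathcomp Require Import all_boot all_order all_algebra.
From mathcomp Require Import all_classical all_reals all_analysis.
From mathcomp Require Import lra zify measurable_realfun.
Import Order.TTheory GRing.Theory Num.Theory.
Import numFieldNormedType.Exports.
Local Open Scope classical_set_scope.
Local Open Scope ring_scope.

Section helpers.
Context d (T : measurableType d) (R : realType).

Lemma tail_mfun (f : nat -> T -> R) (hf : forall n, measurable_fun setT (f n)) (D : T -> R) :
  tail_measurable f D -> measurable_fun setT D.
Proof.
move=> hD _ B mB; rewrite setTI.
have := hD B mB 0%N; rewrite /sigma_from.
apply: smallest_sub; first exact: sigma_algebra_measurable.
move=> A [j [_ [C [mC ->]]]].
by rewrite -(setTI (_ @^-1` _)); apply: hf.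
Qed.

Lemma mset_lt (h : T -> R) (a : R) : measurable_fun setT h ->
  measurable [set x | (a < `|h x|)%R].
Proof.
move=> mh.
have mn : measurable_fun setT ((@Num.norm R R) \o h) by apply: measurableT_comp => //; exact: normr_measurable.
have := mn measurableT _ (measurable_itv `]a, +oo[).
rewrite setTI; congr measurable; apply/seteqP; split => x /=; rewrite in_itv /= andbT //.
Qed.

Lemma mset_le (h : T -> R) (a : R) : measurable_fun setT h ->
  measurable [set x | a <= `|h x|].
Proof.
move=> mh.
have mn : measurable_fun setT ((@Num.norm R R) \o h) by apply: measurableT_comp => //; exact: normr_measurable.
have := mn measurableT _ (measurable_itv `[a, +oo[).
rewrite setTI; congr measurable; apply/seteqP; split => x /=; rewrite in_itv /= andbT //.
Qed.

Lemma cvg0_lt (u : nat -> \bar R) : u @ \oo --> 0%E ->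
  forall e : R, 0 < e -> \forall n \near \oo, (u n < e%:E)%E.
Proof.
move=> /fine_cvgP [Hf Hc] e e0.
move/cvgrPdist_lt: Hc => /(_ e e0) Hc.
apply: filterS2 Hf Hc => n fn /=; rewrite sub0r normrN => H.
rewrite -(fineK fn) lte_fin; exact: le_lt_trans (ler_norm _) H.
Qed.

Variable P : probability T R.

Lemma mono_lt (h : T -> R) (a b : R) : measurable_fun setT h -> a <= b ->
  (P [set x | (b < `|h x|)%R] <= P [set x | (a < `|h x|)%R])%E.
Proof.
move=> mh ab; apply: le_measure; rewrite ?inE; try exact: mset_lt.
by move=> x /=; apply: le_lt_trans.
Qed.

Lemma tailL (h : T -> R) : measurable_fun setT h ->
  forall e : R, 0 < e -> \forall m \near \oo, (P [set x | (m%:R < `|h x|)%R] < e%:E)%E.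
Proof.
move=> mh e e0; apply: cvg0_lt => //.
pose F := fun m : nat => [set x | (m%:R < `|h x|)%R].
have H0 : \bigcap_m F m = set0.
  apply/seteqP; split => x //= Hx.
  have [m Hm] : exists m : nat, `|h x| < m%:R.
    by exists (Num.bound `|h x|); apply: archi_boundP.
  have := Hx m I => /= H; move: (lt_trans H Hm); by rewrite ltxx.
have := (@nonincreasing_cvg_mu _ _ _ P F).
rewrite H0 measure0; apply.
- by rewrite (le_lt_trans (probability_le1 _ _)) ?ltry //; exact: mset_lt.
- by move=> i; exact: mset_lt.
- exact: measurable0.
- move=> i j ij; apply/subsetPset => x /=; apply: le_lt_trans; by rewrite ler_nat.
Qed.
End helpers.

Theorem lemma5p1 (d : measure_display) (T : measurableType d) (R : realType)
    (P : probability T R) (f : nat -> T -> R)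
    (hf : forall n, measurable_fun setT (f n))
    (k : nat -> nat) (hk : strict_incr k)
    (D : nat -> T -> R) (hD : forall N, tail_measurable f (D N))
    (hconv : forall s : nat -> nat, strict_incr s ->
       forall eps : R, 0 < eps ->
       (fun N : nat => P [set x | eps <= `| (N%:R)^-1 * \sum_(n < N) f (k (s n)) x - D N x| ])
         @ \oo --> 0%E) :
  exists s : nat -> nat, strict_incr s /\
    (fun M : R => ereal_sup (range (fun n : nat => P [set x | M < `| f (k (s n)) x | ])))
      @ +oo --> 0%E.
Proof.
have mg : forall n, measurable_fun setT (f (k n)) by move=> n; exact: hf.
have [H|H] := pselect (forall e : R, 0 < e -> exists M : R, forall n,
   (P [set x | (M < `|f (k n) x|)%R] <= e%:E)%E).
- exists id; split; first by move=> n; exact: ltnSn.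
  have sup0 : forall M : R, (0 <= ereal_sup (range (fun n : nat => P [set x | (M < `| f (k (id n)) x |)%R])))%E.
    move=> M; apply: (le_trans (measure_ge0 P [set x | (M < `|f (k 0%N) x|)%R])).
    by apply: ereal_sup_ubound; exists 0%N.
  apply/fine_cvgP; split.
  + apply: filterE => M; rewrite ge0_fin_numE //.
    apply: (@le_lt_trans _ _ 1%E); last exact: ltry.
    apply/ereal_supP => y [n _ <-]; apply: probability_le1; exact: mset_lt.
  + apply/cvgrPdist_lt => e e0.
    have e2 : 0 < e / 2 by rewrite divr_gt0.
    have [M0 HM0] := H _ e2.
    exists M0; split; first exact: num_real.
    move=> M HM /=.
    rewrite sub0r normrN.
    have Hle : (ereal_sup (range (fun n : nat => P [set x | (M < `| f (k (id n)) x |)%R])) <= (e/2)%:E)%E.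
      apply/ereal_supP => y [n _ <-]; apply: le_trans (HM0 n).
      apply: mono_lt => //; exact: ltW.
    have fS : ereal_sup (range (fun n : nat => P [set x | (M < `| f (k (id n)) x |)%R])) \is a fin_num.
      by rewrite ge0_fin_numE // (le_lt_trans Hle) // ltry.
    move: (sup0 M) Hle; rewrite -(fineK fS) !lee_fin => h1 h2.
    rewrite ger0_norm //; lra.
- move/existsNP: H => [e /not_implyP [e0 /forallNP HM]].
  have inf : forall n0 (M : R), exists n, (n0 <= n)%N /\
      (e%:E < P [set x | (M < `|f (k n) x|)%R])%E.
    elim=> [|n0 IH] M.
      have /existsNP [n Hn] := HM M.
      by exists n; split => //; rewrite ltNge; apply/negP.
    case: (@tailL _ _ _ P _ (mg n0) _ e0) => m _ Hm.
    have {}Hm := ltW (Hm m (leqnn m)).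
    have [n [n0n Hn]] := IH (Num.max M m%:R).
    exists n; split.
      have Hne : n != n0.
        apply/eqP => En; move: Hn; rewrite En => Hn.
        have Hmx : (m%:R : R) <= Num.max M m%:R by rewrite le_max lexx orbT.
        have := lt_le_trans Hn (le_trans (@mono_lt _ _ _ P _ _ _ (mg n0) Hmx) Hm).
        by rewrite ltxx.
      by rewrite ltn_neqAle eq_sym Hne n0n.
    apply: lt_le_trans Hn _; apply: mono_lt => //; by rewrite le_max lexx.
  have /choice [c Hc] : forall mn : nat * nat, exists n, (mn.2 <= n)%N /\
      (e%:E < P [set x | ((mn.1)%:R < `|f (k n) x|)%R])%E.
    by move=> [m n0]; exact: inf.
  pose s := fix s (N : nat) : nat := if N is N'.+1 then c (N, (s N').+1) else c (0%N, 0%N).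
  have sN : forall N, (e%:E < P [set x | (N%:R < `|f (k (s N)) x|)%R])%E.
    by case => [|N]; [exact: (Hc (0%N, 0%N)).2 | exact: (Hc (N.+1, (s N).+1)).2].
  have hs : strict_incr s by move=> N; exact: (Hc (N.+1, (s N).+1)).1.
  have ht : strict_incr (fun n => s n.+1) by move=> N; exact: hs.
  exfalso.
  have e3 : 0 < e / 3 by rewrite divr_gt0.
  have h14 : (0:R) < 1/4 by rewrite divr_gt0.
  case: (@cvg0_lt R _ (hconv s hs _ h14) _ e3) => N1 _ HN1.
  case: (@cvg0_lt R _ (hconv _ ht _ h14) _ e3) => N2 _ HN2.
  case: (@tailL _ _ _ P _ (mg (s 0%N)) _ e3) => m0 _ Hm0.
  have Hz := Hm0 m0 (leqnn _).
  pose N := (N1 + N2 + m0.*2).+1.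
  have HX := HN1 N ltac:(rewrite /= /N; lia).
  have HY := HN2 N ltac:(rewrite /= /N; lia).
  have mA : forall (u : nat -> nat) (M : nat), measurable_fun setT
      (fun x => (M%:R)^-1 * \sum_(n < M) f (k (u n)) x - D M x).
    move=> u M; apply: measurable_funB; last exact: @tail_mfun _ _ _ _ hf _ (hD M).
    apply: measurable_funM; first exact: measurable_cst.
    by apply: measurable_sum => i; exact: hf.
  set X := [set x | _ <= _] in HX.
  set Y := [set x | _ <= _] in HY.
  set Z := [set x | _ < _] in Hz.
  have mX : measurable X by exact: mset_le (mA s N).
  have mY : measurable Y by exact: mset_le (mA (fun n => s n.+1) N).
  have mZ : measurable Z by exact: mset_lt.
  have sub : [set x | (N%:R < `|f (k (s N)) x|)%R] `<=` X `|` Y `|` Z.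
    move=> x /= Hx.
    rewrite /X /Y /Z /=.
    case: (leP (1/4) _) => hX; first by left; left.
    case: (leP (1/4) _) => hY; first by left; right.
    case: (ltP (m0%:R) _) => hZ; first by right.
    exfalso; move: Hx; apply/negP; rewrite -leNgt.
    set u := f (k (s N)) x in hX hY hZ *.
    set v := f (k (s 0%N)) x in hX hY hZ *.
    set a := \sum_(n < N) f (k (s n)) x in hX.
    set b := \sum_(n < N) f (k (s n.+1)) x in hY.
    have tel : b - a = u - v.
      rewrite /a /b -sumrB.
      rewrite -(big_mkord xpredT (fun n => f (k (s n.+1)) x - f (k (s n)) x)).
      by rewrite telescope_sumr.
    have w0 : (0 : R) < N%:R by rewrite ltr0n.
    have hm : (m0.*2 < N)%N by rewrite /N; lia.
    have hm' : 2 * m0%:R < (N%:R : R).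
      by rewrite -(ltr_nat R) -muln2 natrM mulrC in hm.
    set w := (N%:R : R) in w0 hm' hX hY *.
    set q := w^-1 * (b - a).
    have Hq : u - v = w * q by rewrite /q -tel mulrA mulfV ?gt_eqF // mul1r.
    move: hX hY hZ; rewrite !ltr_norml !ler_norml => /andP[hX1 hX2] /andP[hY1 hY2] /andP[hZ1 hZ2].
    have q1 : q < 1/2 by rewrite /q mulrBr; lra.
    have q2 : - (1/2) < q by rewrite /q mulrBr; lra.
    have wq1 : w * q < w / 2 by nra.
    have wq2 : - (w / 2) < w * q by nra.
    apply/andP; split; lra.
  have L1 : (P [set x | (N%:R < `|f (k (s N)) x|)%R] <= P X + P Y + P Z)%E.
    apply: le_trans (le_measure _ _ _ sub) _; rewrite ?inE.
    - exact: mset_lt.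
    - by apply: measurableU => //; exact: measurableU.
    apply: le_trans (measureU2 _ _ _) _ => //; first exact: measurableU.
    by apply: leeD => //; exact: measureU2.
  have L2 : (P X + P Y + P Z < (e/3 + e/3 + e/3)%:E)%E.
    by rewrite !EFinD; apply: lteD => //; apply: lteD.
  have := lt_le_trans (sN N) (le_trans L1 (ltW L2)).
  by rewrite lte_fin; lra.
Qed.
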